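(* Let $(X,x_0)$ be a $3$-dimensional terminal singular point over $\mathbb{C}$ which is a nonhypersurface singularity, is not a quotient singularity, and has index $\mathrm{ind}_{x_0}X=r>1$. Present $(X,x_0)$ in the normal form of Mori's classification as a hypersurface in $\mathbb{C}^4/\mathbb{Z}_r$ with coordinates $(x,y,z,u)$, and let $\mu:Y\to X$ be the weighted blow up with weights $\mathrm{wt}(x,y,z,u)=(1,1,1,1)$, with exceptional divisor $E$, such that $K_Y=\mu^*K_X+E$. Then \[\mathrm{w}\text{-}\mathrm{mult}_{\mu:x_0}X = 2/r.\]
   Context: Mori's classification: a $3$-fold terminal nonhypersurface singular point is analytically isomorphic to one of: (1) $cA/r$: $\{xy+f(z,u^r)=0\}\subset\mathbb{C}^4/\mathbb{Z}_r(a,r-a,r,1)$, $\gcd(r,a)=1$; (2) $cAx/4$: $\{x^2+y^2+f(z,u^2)=0\}\subset\mathbb{C}^4/\mathbb{Z}_4(1,3,2,1)$; (3) $cAx/2$: $\{x^2+y^2+f(z,u)=0\}$, $f\in(z,u)^4$, in $\mathbb{C}^4/\mathbb{Z}_2(1,2,1,1)$; (4) $cD/2$: $\{u^2+z^3+xyz+f(x,y)=0\}$, or $\{u^2+xyz+z^n+f(x,y)=0\}$ ($n\ge4$), or $\{u^2+y^2z+z^n+f(x,y)=0\}$ ($n\ge3$), $f\in(x,y)^4$, in $\mathbb{C}^4/\mathbb{Z}_2(1,1,2,1)$; (5) $cD/3$: $\{u^2+x^3+y^3+z^3=0\}$, or $\{u^2+x^3+yz^2+f=0\}$, or $\{u^2+x^3+y^3+f=0\}$,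 $f\in(x,y,z)^4$, in $\mathbb{C}^4/\mathbb{Z}_3(1,2,2,3)$; (6) $cE/2$: $\{u^2+x^3+g(y,z)x+h(y,z)=0\}$, $g,h\in(y,z)^4$, in $\mathbb{C}^4/\mathbb{Z}_2(2,1,1,1)$; where the equations define terminal hypersurface singularities and are equivariant. Here $\mathbb{Z}_r(w_1,\dots,w_4)$ means the generator acts by $\zeta^{w_i}$ on the $i$-th coordinate. For the weighted blow up with weights $(1,1,1,1)$, $\mu_*\mathcal{O}_Y(-hE)$ is the ideal of $\mathcal{O}_{X,x_0}$ of restrictions of invariant functions all of whose monomials in $x,y,z,u$ have total degree $\ge h$. Weighted multiplicity: for a subvariety $W\subseteq X$ of dimension $p$ normal at $x_0$ with strict transform $\bar W$, $\mathrm{w}\text{-}\mathrm{mult}_{\mu:x_0}W$ is the number with $\dim\mathcal{O}_{W,x_0}/\mu_*\mathcal{O}_{\bar W}(-hE|_{\bar W})=\mathrm{w}\text{-}\mathrm{mult}_{\mu:x_0}W\cdot h^p/p!+(\text{lower order terms in }h)$. *)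

(* Defs.v *)
(* Formal-power-series model of Mori's normal forms of
   3-fold terminal nonhypersurface points and of the weighted multiplicity
   for the (1,1,1,1) weighted blow up, following the paper's description:
     O_{X,x0}   = invariant series / invariant series in the ideal (F),
     mu_* O_Y(-hE) = image of invariant series all of whose monomials have
                     total degree >= h. *)
From HB Require Import structures.
From mathcomp Require Import all_boot all_order all_algebra.
Set Implicit Arguments. Unset Strict Implicit. Unset Printing Implicit Defensive.
Import Order.TTheory GRing.Theory Num.Theory.
Local Open Scope ring_scope.

(* exponent vector (a,b,c,d) of the monomial x^a y^b z^c u^d *)
Definition mono := (nat * nat * nat * nat)%type.
(* weights of the Z_r action on (x,y,z,u) *)
Definition wts := (nat * nat * nat * nat)%type.

Definition tdeg (m : mono) : nat :=
  let: (a, b, c, d) := m in (a + b + c + d)%N.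
Definition wdeg (w : wts) (m : mono) : nat :=
  let: (w1, w2, w3, w4) := w in let: (a, b, c, d) := m in
  (w1 * a + w2 * b + w3 * c + w4 * d)%N.

Section PS.
Variable C : numClosedFieldType.

Definition ps := mono -> C.

Definition mon (a b c d : nat) : ps := fun m => if m == (a, b, c, d) then 1 else 0.

Definition psmul (s t : ps) : ps := fun m =>
  let: (a, b, c, d) := m in
  \sum_(i < a.+1) \sum_(j < b.+1) \sum_(k < c.+1) \sum_(l < d.+1)
     s (i : nat, j : nat, k : nat, l : nat) * t ((a - i)%N, (b - j)%N, (c - k)%N, (d - l)%N).

(* s is invariant under Z_r(w): the generator acts by zeta^{w_i} on the
   i-th coordinate, zeta a primitive r-th root of unity *)
Definition invariant (r : nat) (w : wts) (s : ps) : Prop :=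
  forall m, s m != 0 -> wdeg w m = 0 %[mod r].

Definition semi_invariant (r : nat) (w : wts) (s : ps) : Prop :=
  exists e : nat, forall m, s m != 0 -> wdeg w m = e %[mod r].

Definition ord_ge (s : ps) (h : nat) : Prop := forall m, (tdeg m < h)%N -> s m = 0.

Definition ord2_ge (f : nat -> nat -> C) (k : nat) : Prop :=
  forall i j, (i + j < k)%N -> f i j = 0.
Definition ord3_ge (f : nat -> nat -> nat -> C) (k : nat) : Prop :=
  forall i j l, (i + j + l < k)%N -> f i j l = 0.

(* finite codimension: the quotient V / (W ∩ V) has C-dimension n
   (W is a subspace, V a subspace) *)
Definition lincomb (n : nat) (c : 'I_n -> C) (vs : 'I_n -> ps) : ps :=
  fun m => \sum_(i < n) c i * vs i m.

Definition codim_eq (V W : ps -> Prop) (n : nat) : Prop :=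
  exists vs : 'I_n -> ps,
    [/\ forall i, V (vs i),
        forall v, V v -> exists c : 'I_n -> C,
            W (fun m => v m - lincomb c vs m)
      & forall c : 'I_n -> C, W (lincomb c vs) -> forall i, c i = 0].

Definition Inv (r : nat) (w : wts) : ps -> Prop := invariant r w.

Definition IdX (r : nat) (w : wts) (F : ps) : ps -> Prop :=
  fun s => invariant r w s /\ exists t : ps, forall m, s m = psmul F t m.

(* preimage in Inv of mu_* O_Y(-hE) + the ideal of X *)
Definition blowup_ideal (r : nat) (w : wts) (F : ps) (h : nat) : ps -> Prop :=
  fun s => exists s1 s2, [/\ IdX r w F s1, invariant r w s2, ord_ge s2 h
                           & forall m, s m = s1 m + s2 m].

(* dim O_{X,x0} / mu_* O_Y(-hE) = n *)
Definition colength (r : nat) (w : wts) (F : ps) (h n : nat) : Prop :=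
  codim_eq (Inv r w) (blowup_ideal r w F h) n.

(* w-mult_{mu:x0} X = q for the p-dimensional X:
   dim O/mu_*O_Y(-hE) = q h^p/p! + (terms of lower order in h) *)
Definition wmult_is (r : nat) (w : wts) (F : ps) (p : nat) (q : rat) : Prop :=
  (forall h, exists n, colength r w F h n) /\
  exists K : rat, forall h n, (0 < h)%N -> colength r w F h n ->
    `| n%:R - q * (h%:R ^+ p) / (p`!)%:R | <= K * h%:R ^+ p.-1.

(* Mori's normal forms (1)-(6): F is the equation in C^4, r the index,
   w the weights of Z_r *)
Definition mori_normal_form (r : nat) (w : wts) (F : ps) : Prop :=
  (exists (a : nat) (f : nat -> nat -> C),
     [/\ (0 < a < r)%N, coprime r a, w = (a, (r - a)%N, r, 1%N)
       & forall m, F m = mon 1 1 0 0 m +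
            (let: (p, q, s, t) := m in
             if [&& p == 0%N, q == 0%N & (r %| t)%N] then f s (t %/ r)%N else 0)])
  \/
  (exists f : nat -> nat -> C,
     [/\ r = 4%N, w = (1, 3, 2, 1)%N
       & forall m, F m = mon 2 0 0 0 m + mon 0 2 0 0 m +
            (let: (p, q, s, t) := m in
             if [&& p == 0%N, q == 0%N & ~~ odd t] then f s t./2 else 0)])
  \/
  (exists f : nat -> nat -> C,
     [/\ r = 2%N, w = (1, 2, 1, 1)%N, ord2_ge f 4
       & forall m, F m = mon 2 0 0 0 m + mon 0 2 0 0 m +
            (let: (p, q, s, t) := m in
             if (p == 0%N) && (q == 0%N) then f s t else 0)])
  \/
  (exists (f : nat -> nat -> C) (g : ps),
     [/\ r = 2%N, w = (1, 1, 2, 1)%N, ord2_ge f 4,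
         (forall m, g m = mon 0 0 3 0 m + mon 1 1 1 0 m)
         \/ (exists n, (4 <= n)%N /\ forall m, g m = mon 1 1 1 0 m + mon 0 0 n 0 m)
         \/ (exists n, (3 <= n)%N /\ forall m, g m = mon 0 2 1 0 m + mon 0 0 n 0 m)
       & forall m, F m = mon 0 0 0 2 m + g m +
            (let: (p, q, s, t) := m in
             if (s == 0%N) && (t == 0%N) then f p q else 0)])
  \/
  (exists (f : nat -> nat -> nat -> C) (g : ps),
     [/\ r = 3%N, w = (1, 2, 2, 3)%N, ord3_ge f 4,
         ((forall m, g m = mon 3 0 0 0 m + mon 0 3 0 0 m + mon 0 0 3 0 m)
          /\ (forall i j l, f i j l = 0))
         \/ (forall m, g m = mon 3 0 0 0 m + mon 0 1 2 0 m)
         \/ (forall m, g m = mon 3 0 0 0 m + mon 0 3 0 0 m)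
       & forall m, F m = mon 0 0 0 2 m + g m +
            (let: (p, q, s, t) := m in
             if t == 0%N then f p q s else 0)])
  \/
  (exists g h : nat -> nat -> C,
     [/\ r = 2%N, w = (2, 1, 1, 1)%N, ord2_ge g 4, ord2_ge h 4
       & forall m, F m = mon 0 0 0 2 m + mon 3 0 0 0 m +
            (let: (p, q, s, t) := m in
             if t == 0%N then
               (if p == 1%N then g q s else 0) + (if p == 0%N then h q s else 0)
             else 0)]).

Definition through_origin (F : ps) : Prop := F (0, 0, 0, 0)%N = 0.

(* (X,x0) is a quotient singularity iff its index-one cover {F = 0} is
   smooth at 0, i.e. F has a nonzero linear term *)
Definition nf_quotient_sing (F : ps) : Prop :=
  ~ ord_ge F 2.

End PS.

(* Main.v *)
Require Import Defs.
From Stdlib Require Import ClassicalEpsilon Classical.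
From HB Require Import structures.
From mathcomp Require Import all_boot all_order all_algebra.
From mathcomp Require Import zify ring lra.
Set Implicit Arguments. Unset Strict Implicit. Unset Printing Implicit Defensive.
Import Order.TTheory GRing.Theory Num.Theory.
Local Open Scope ring_scope.
Set Warnings "-notation-overridden -ambiguous-paths".
Definition le4 (m n : mono) : bool :=
  let: (a, b, c, d) := m in let: (a', b', c', d') := n in
  [&& (a <= a')%N, (b <= b')%N, (c <= c')%N & (d <= d')%N].
Definition sub4 (n m : mono) : mono :=
  let: (a, b, c, d) := n in let: (a', b', c', d') := m in
  ((a - a')%N, (b - b')%N, (c - c')%N, (d - d')%N).
Definition add4 (n m : mono) : mono :=
  let: (a, b, c, d) := n in let: (a', b', c', d') := m in
  ((a + a')%N, (b + b')%N, (c + c')%N, (d + d')%N).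

Lemma wdegD w m n : wdeg w (add4 m n) = (wdeg w m + wdeg w n)%N.
Proof. case: w => [[[? ?] ?] ?]; case: m => [[[? ?] ?] ?]; case: n => [[[? ?] ?] ?] /=; lia. Qed.
Lemma tdegD m n : tdeg (add4 m n) = (tdeg m + tdeg n)%N.
Proof. case: m => [[[? ?] ?] ?]; case: n => [[[? ?] ?] ?] /=; lia. Qed.
Lemma subK4 m n : le4 m n -> add4 (sub4 n m) m = n.
Proof. case: m => [[[? ?] ?] ?]; case: n => [[[? ?] ?] ?] /= /and4P [? ? ? ?].
 congr (_,_,_,_); lia. Qed.
Lemma addK4 m n : sub4 (add4 n m) m = n.
Proof. case: m => [[[? ?] ?] ?]; case: n => [[[? ?] ?] ?] /=. congr (_,_,_,_); lia. Qed.
Lemma le4_add m n : le4 m (add4 n m).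
Proof. case: m => [[[? ?] ?] ?]; case: n => [[[? ?] ?] ?] /=; apply/and4P; split; lia. Qed.

Section PSL.
Variable C : numClosedFieldType.

Lemma sum_single n (g : 'I_n.+1 -> C) (i0 : 'I_n.+1) :
  (forall i, i != i0 -> g i = 0) -> \sum_i g i = g i0.
Proof. move=> H; rewrite (bigD1 i0) //= big1 ?addr0 // => i /H //. Qed.

Lemma psmul_zero (s t : ps C) m :
  (forall m', le4 m' m -> s m' * t (sub4 m m') = 0) -> psmul s t m = 0.
Proof.
case: m => [[[a b] c] d] H /=.
apply: big1 => i _; apply: big1 => j _; apply: big1 => k _; apply: big1 => l _.
apply: (H (i : nat, j : nat, k : nat, l : nat)).
by apply/and4P; split; rewrite -ltnS; exact: ltn_ord.
Qed.

Lemma psmul_single (s t : ps C) m M0 : le4 M0 m ->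
  (forall m', le4 m' m -> m' != M0 -> s m' * t (sub4 m m') = 0) ->
  psmul s t m = s M0 * t (sub4 m M0).
Proof.
case: m => [[[a b] c] d]; case: M0 => [[[a0 b0] c0] d0] /= /and4P [ha hb hc hd] H.
have la : (a0 < a.+1)%N by rewrite ltnS.
have lb : (b0 < b.+1)%N by rewrite ltnS.
have lc : (c0 < c.+1)%N by rewrite ltnS.
have ld : (d0 < d.+1)%N by rewrite ltnS.
rewrite (@sum_single _ _ (Ordinal la)) /=; last first.
  move=> i ni; apply: big1 => j _; apply: big1 => k _; apply: big1 => l _.
  apply: H; first by apply/and4P; split; rewrite -ltnS; exact: ltn_ord.
  apply/eqP => E; move/eqP: ni; apply; apply: val_inj => /=; case: E => *; lia.
rewrite (@sum_single _ _ (Ordinal lb)) /=; last first.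
  move=> i ni; apply: big1 => k _; apply: big1 => l _.
  apply: H; first by apply/and4P; split => //; rewrite -ltnS; exact: ltn_ord.
  apply/eqP => E; move/eqP: ni; apply; apply: val_inj => /=; case: E => *; lia.
rewrite (@sum_single _ _ (Ordinal lc)) /=; last first.
  move=> i ni; apply: big1 => l _.
  apply: H; first by apply/and4P; split => //; rewrite -ltnS; exact: ltn_ord.
  apply/eqP => E; move/eqP: ni; apply; apply: val_inj => /=; case: E => *; lia.
rewrite (@sum_single _ _ (Ordinal ld)) //=.
  move=> i ni; apply: H; first by apply/and4P; split => //; rewrite -ltnS; exact: ltn_ord.
  apply/eqP => E; move/eqP: ni; apply; apply: val_inj => /=; case: E => *; lia.
Qed.

Lemma psmulDr (s t1 t2 : ps C) m :
  psmul s (fun x => t1 x + t2 x) m = psmul s t1 m + psmul s t2 m.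
Proof.
case: m => [[[a b] c] d] /=.
rewrite -big_split /=; apply: eq_bigr => i _.
rewrite -big_split /=; apply: eq_bigr => j _.
rewrite -big_split /=; apply: eq_bigr => k _.
rewrite -big_split /=; apply: eq_bigr => l _.
by rewrite mulrDr.
Qed.

End PSL.

Section WCl.
Variables (C : numClosedFieldType) (r : nat) (w : wts) (F : ps C) (h : nat).

Lemma psmulZr (s t : ps C) a m :
  psmul s (fun x => a * t x) m = a * psmul s t m.
Proof.
case: m => [[[a1 b] c] d] /=.
rewrite mulr_sumr; apply: eq_bigr => i _.
rewrite mulr_sumr; apply: eq_bigr => j _.
rewrite mulr_sumr; apply: eq_bigr => k _.
rewrite mulr_sumr; apply: eq_bigr => l _.
by rewrite mulrCA.
Qed.

Lemma inv_add (x y : ps C) : Defs.invariant r w x -> Defs.invariant r w y ->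
  Defs.invariant r w (fun m => x m + y m).
Proof.
move=> hx hy m nz; case: (eqVneq (x m) 0) => [e|]; last exact: hx.
apply: hy; by move: nz; rewrite e add0r.
Qed.

Lemma inv_scale (x : ps C) a : Defs.invariant r w x -> Defs.invariant r w (fun m => a * x m).
Proof. move=> hx m nz; apply: hx; apply: contraNneq nz => ->; by rewrite mulr0. Qed.

Lemma inv_ext (x y : ps C) : Defs.invariant r w x -> (forall m, x m = y m) -> Defs.invariant r w y.
Proof. by move=> hx e m; rewrite -e; apply: hx. Qed.

Lemma W_ext (x y : ps C) : blowup_ideal r w F h x -> (forall m, x m = y m) ->
  blowup_ideal r w F h y.
Proof.
move=> [s1 [s2 [H1 H2 H3 H4]]] e; exists s1, s2; split => // m; by rewrite -e.
Qed.

Lemma W_add (x y : ps C) : blowup_ideal r w F h x -> blowup_ideal r w F h y ->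
  blowup_ideal r w F h (fun m => x m + y m).
Proof.
move=> [s1 [s2 [[I1 [t1 T1]] H2 H3 H4]]] [u1 [u2 [[J1 [t2 T2]] K2 K3 K4]]].
exists (fun m => s1 m + u1 m), (fun m => s2 m + u2 m); split.
- split; first exact: inv_add.
  exists (fun m => t1 m + t2 m) => m; by rewrite psmulDr T1 T2.
- exact: inv_add.
- by move=> m hm; rewrite H3 // K3 // addr0.
- move=> m; rewrite H4 K4; ring.
Qed.

Lemma W_scale (x : ps C) a : blowup_ideal r w F h x ->
  blowup_ideal r w F h (fun m => a * x m).
Proof.
move=> [s1 [s2 [[I1 [t1 T1]] H2 H3 H4]]].
exists (fun m => a * s1 m), (fun m => a * s2 m); split.
- split; first exact: inv_scale.
  exists (fun m => a * t1 m) => m; by rewrite psmulZr T1.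
- exact: inv_scale.
- by move=> m hm; rewrite H3 // mulr0.
- move=> m; rewrite H4; ring.
Qed.

Lemma W_0 : blowup_ideal r w F h (fun _ => 0).
Proof.
exists (fun _ => 0), (fun _ => 0); split => //.
- split; first by move=> m; rewrite eqxx.
  exists (fun _ => 0) => m; rewrite psmul_zero // => m' _; by rewrite mulr0.
- by move=> m; rewrite eqxx.
- by move=> m; rewrite addr0.
Qed.

End WCl.

Section Codim.
Variable C : numClosedFieldType.
Variable W : ps C -> Prop.
Hypothesis Wext : forall x y, W x -> (forall m, x m = y m) -> W y.
Hypothesis Wadd : forall x y, W x -> W y -> W (fun m => x m + y m).
Hypothesis Wsc : forall x a, W x -> W (fun m => a * x m).
Hypothesis W0 : W (fun _ => 0).

Lemma Wsum (I : Type) (rs : seq I) (X : I -> ps C) (c : I -> C) :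
  (forall j, W (X j)) -> W (fun m => \sum_(j <- rs) c j * X j m).
Proof.
move=> HX; elim: rs => [|j rs IH].
  by apply: (Wext W0) => m; rewrite big_nil.
apply: (Wext (Wadd (Wsc (c j) (HX j)) IH)) => m; by rewrite big_cons.
Qed.

Lemma codim_le (V : ps C -> Prop) n n' (us : 'I_n -> ps C) (vs : 'I_n' -> ps C) :
  (forall v, V v -> exists a, W (fun m => v m - lincomb a us m)) ->
  (forall j, V (vs j)) ->
  (forall c, W (lincomb c vs) -> forall i, c i = 0) ->
  (n' <= n)%N.
Proof.
move=> Hsp Hv Hind.
pose f j := proj1_sig (constructive_indefinite_description _ (Hsp _ (Hv j))).
have Hf : forall j, W (fun m => vs j m - lincomb (f j) us m).
  move=> j; exact: (proj2_sig (constructive_indefinite_description _ (Hsp _ (Hv j)))).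
rewrite leqNgt; apply/negP => lt.
pose A := \matrix_(j < n', i < n) f j i.
have rk : (0 < \rank (kermx A))%N by rewrite mxrank_ker; have := rank_leq_col A; lia.
have nz : kermx A != 0 by rewrite -mxrank_eq0 -lt0n.
have /existsP [j0 /existsP [j1 Hj]] : [exists j0, exists j1, kermx A j0 j1 != 0].
  apply: contraR nz => /existsPn H; apply/eqP/matrixP => a b; rewrite [RHS]mxE.
  by move/existsPn: (H a) => /(_ b); rewrite negbK => /eqP.
pose c j := kermx A j0 j.
have Hc : forall i, \sum_j c j * f j i = 0.
  move=> i; have := congr1 (fun M : 'M[C]_(n', n) => M j0 i) (mulmx_ker A); rewrite mxE [RHS]mxE => H.
  apply: (etrans _ H); apply: eq_bigr => j _; by rewrite [A j i]mxE.
have : W (lincomb c vs).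
  apply: (Wext (Wsum (index_enum 'I_n') c Hf)) => m.
  rewrite /lincomb.
  have -> : \sum_(j <- index_enum 'I_n') c j * (vs j m - lincomb (f j) us m) =
     \sum_(j < n') c j * vs j m - \sum_(j < n') c j * lincomb (f j) us m.
    by rewrite -sumrB; apply: eq_bigr => j _; rewrite mulrBr.
  suff -> : \sum_(j < n') c j * lincomb (f j) us m = 0 by rewrite subr0.
  rewrite /lincomb.
  under eq_bigr => j _ do rewrite mulr_sumr.
  rewrite exchange_big /=; apply: big1 => i _.
  under eq_bigr => j _ do rewrite mulrA.
  by rewrite -mulr_suml Hc mul0r.
move/Hind/(_ j1); exact/eqP.
Qed.

End Codim.
Definition allmon (h : nat) : seq mono :=
  [seq (p, d) | p <- [seq (q, c) | q <- [seq (a, b) | a <- iota 0 h, b <- iota 0 h],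
                                   c <- iota 0 h], d <- iota 0 h].

Lemma allmon_uniq h : uniq (allmon h).
Proof.
apply: allpairs_uniq; [|exact: iota_uniq| by move=> [? ?] [? ?] _ _ /= ->].
apply: allpairs_uniq; [|exact: iota_uniq| by move=> [? ?] [? ?] _ _ /= ->].
apply: allpairs_uniq; [exact: iota_uniq|exact: iota_uniq| by move=> [? ?] [? ?] _ _ /= ->].
Qed.

Lemma mem_allmon h m : (tdeg m < h)%N -> m \in allmon h.
Proof.
case: m => [[[a b] c] d] /= hm.
apply: allpairs_f; last by rewrite mem_iota; lia.
apply: allpairs_f; last by rewrite mem_iota; lia.
by apply: allpairs_f; rewrite mem_iota; lia.
Qed.

Section Gen.
Variables (C : numClosedFieldType) (r : nat) (w cw : wts) (F : ps C) (M0 : mono).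
Hypothesis r_gt0 : (0 < r)%N.
Hypothesis FM0 : F M0 = 1.
Hypothesis Fsemi : forall m, F m != 0 -> wdeg w m = wdeg w M0 %[mod r].
Hypothesis Fdeg : forall m, F m != 0 -> (2 <= tdeg m)%N.
Hypothesis M0deg : tdeg M0 = 2%N.
Hypothesis Frho : forall m, F m != 0 -> m != M0 -> (wdeg cw M0 < wdeg cw m)%N.
Hypothesis cw_le : forall m, (wdeg cw m <= 4 * tdeg m)%N.

Definition invb m := (wdeg w m %% r == 0)%N.
Definition stdb m := ~~ le4 M0 m.
Definition Sh h := [seq m <- allmon h | [&& (tdeg m < h)%N, invb m & stdb m]].
Definition x0 : mono := (0, 0, 0, 0)%N.
Definition vsh h (i : 'I_(size (Sh h))) : ps C :=
  fun m => (m == nth x0 (Sh h) i)%:R.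

Lemma Sh_uniq h : uniq (Sh h).
Proof. exact/filter_uniq/allmon_uniq. Qed.

Lemma mem_Sh h m : (m \in Sh h) = [&& (tdeg m < h)%N, invb m & stdb m].
Proof.
rewrite mem_filter; case: (boolP (tdeg m < h)%N) => //= hm.
by rewrite mem_allmon // andbT.
Qed.

Lemma lincomb_nth h c (i : 'I_(size (Sh h))) :
  lincomb c (@vsh h) (nth x0 (Sh h) i) = c i.
Proof.
rewrite /lincomb (bigD1 i) //= /vsh eqxx mulr1 big1 ?addr0 // => j ji.
rewrite (nth_uniq x0 (ltn_ord i) (ltn_ord j) (Sh_uniq h)).
by move: ji; rewrite -val_eqE /= eq_sym => /negbTE ->; rewrite mulr0.
Qed.

Lemma lincomb_notin h c m : m \notin Sh h -> lincomb c (@vsh h) m = 0.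
Proof.
move=> nm; apply: big1 => j _; rewrite /vsh.
case: eqP => [e|]; last by rewrite mulr0.
by move: nm; rewrite e mem_nth.
Qed.

Lemma Inv_vsh h i : Inv r w (@vsh h i).
Proof.
move=> m; rewrite /vsh /=; case: (eqVneq m (nth x0 (Sh h) i)) => [->|_]; last by rewrite eqxx.
move=> _; have := mem_nth x0 (ltn_ord i); rewrite mem_Sh => /and3P [_ /eqP H _].
by rewrite mod0n.
Qed.

Lemma Inv_lincomb h c : Inv r w (lincomb c (@vsh h)).
Proof.
move=> m nz; case: (boolP (m \in Sh h)) => [mS|nS]; last by rewrite lincomb_notin ?eqxx in nz.
by move: mS; rewrite mem_Sh => /and3P [_ /eqP H _]; rewrite mod0n.
Qed.

Lemma wdeg_sub v m M : le4 m M -> (wdeg v (sub4 M m) + wdeg v m)%N = wdeg v M.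
Proof. by move=> le; rewrite -wdegD subK4. Qed.
Lemma tdeg_sub m M : le4 m M -> (tdeg (sub4 M m) + tdeg m)%N = tdeg M.
Proof. by move=> le; rewrite -tdegD subK4. Qed.

Lemma rho_M0 m : F m != 0 -> (wdeg cw M0 <= wdeg cw m)%N.
Proof. move=> nz; case: (eqVneq m M0) => [->//|ne]; exact/ltnW/Frho. Qed.

Lemma inv_Ft (t : ps C) : (forall N, t N != 0 -> invb (add4 N M0)) ->
  Defs.invariant r w (psmul F t).
Proof.
move=> Ht m nz; apply/eqP; apply: contraNT nz => hb; apply/eqP.
apply: psmul_zero => m' le.
case: (eqVneq (F m') 0) => [->|nF]; first by rewrite mul0r.
case: (eqVneq (t (sub4 m m')) 0) => [->|nt]; first by rewrite mulr0.
exfalso; move: hb; apply/negP/negPn.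
have := Ht _ nt; rewrite /invb wdegD => /eqP H.
have := Fsemi nF => H2.
rewrite mod0n -(wdeg_sub w le) -modnDmr H2 modnDmr H.
done.
Qed.

Section Fixh.
Variable h : nat.
Let W := blowup_ideal r w F h.
Let S := Sh h.
Let vs := @vsh h.

Lemma span_ind k : forall s, Inv r w s ->
  (forall M, (tdeg M < h)%N -> le4 M0 M -> s M != 0 -> (4 * h - k <= wdeg cw M)%N) ->
  exists c, W (fun m => s m - lincomb c vs m).
Proof.
elim: k => [|k IH] s Is Hbad.
- exists (fun i => s (nth x0 S i)).
  have Hs : forall m, m \in S -> lincomb (fun i => s (nth x0 S i)) vs m = s m.
    move=> m mS; have := mS; rewrite -index_mem => lt.
    have := lincomb_nth (fun i => s (nth x0 S i)) (Ordinal lt).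
    by rewrite /= nth_index.
  exists (fun _ => 0), (fun m => s m - lincomb (fun i => s (nth x0 S i)) vs m); split.
  + split; first by move=> m; rewrite eqxx.
    exists (fun _ => 0) => m; rewrite psmul_zero // => m' _; by rewrite mulr0.
  + move=> m; case: (boolP (m \in S)) => [mS|nS]; first by rewrite Hs // subrr eqxx.
    rewrite lincomb_notin // subr0; exact: Is.
  + move=> m hm; case: (boolP (m \in S)) => [mS|nS]; first by rewrite Hs // subrr.
    rewrite lincomb_notin // subr0; move: nS; rewrite mem_Sh hm /=.
    case: (eqVneq (s m) 0) => // nz.
    have := Is _ nz => /eqP; rewrite mod0n => iv.
    rewrite /invb iv /stdb /= negbK => le.
    have := Hbad _ hm le nz; have := cw_le m; lia.
  + by move=> m; rewrite add0r.
- pose j := (4 * h - k.+1)%N.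
  pose t0 : ps C := fun N => if (wdeg cw (add4 N M0) == j) && (tdeg (add4 N M0) < h)%N
                            then s (add4 N M0) else 0.
  have FA : forall M, (wdeg cw M < j)%N -> psmul F t0 M = 0.
    move=> M lt; apply: psmul_zero => m' le.
    case: (eqVneq (F m') 0) => [->|nF]; first by rewrite mul0r.
    rewrite /t0; case: ifP; last by rewrite mulr0.
    move=> /andP [/eqP e _]; exfalso.
    move: e; rewrite wdegD; have := wdeg_sub cw le; have := rho_M0 nF; lia.
  have FB : forall M, (tdeg M < h)%N -> wdeg cw M = j -> le4 M0 M -> psmul F t0 M = s M.
    move=> M hM e le; rewrite (psmul_single le); last first.
      move=> m' le' ne.
      case: (eqVneq (F m') 0) => [->|nF]; first by rewrite mul0r.
      rewrite /t0; case: ifP; last by rewrite mulr0.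
      move=> /andP [/eqP e' _]; exfalso.
      move: e'; rewrite wdegD; have := wdeg_sub cw le'; have := Frho nF ne; lia.
    by rewrite FM0 mul1r /t0 subK4 // e eqxx hM.
  have FC : Defs.invariant r w (psmul F t0).
    apply: inv_Ft => N; rewrite /t0; case: ifP => _; last by rewrite eqxx.
    by move=> /Is /eqP; rewrite mod0n.
  have I' : Inv r w (fun m => s m - psmul F t0 m).
    apply: inv_add => //; apply: (inv_ext (@inv_scale _ _ _ _ (-1) FC)) => m /=; ring.
  have B' : forall M, (tdeg M < h)%N -> le4 M0 M -> s M - psmul F t0 M != 0 ->
      (4 * h - k <= wdeg cw M)%N.
    move=> M hM le nz.
    case: (ltnP (wdeg cw M) j) => [lt|ge].
      move: nz; rewrite FA // subr0 => nz; have := Hbad _ hM le nz; lia.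
    case: (eqVneq (wdeg cw M) j) => [e|ne]; last by lia.
    by move: nz; rewrite FB // subrr eqxx.
  have [c Hc] := IH _ I' B'.
  exists c.
  apply: (W_ext (W_add Hc (_ : W (fun m => psmul F t0 m)))) => [|m]; last by ring.
  exists (fun m => psmul F t0 m), (fun _ => 0); split => //.
  * by split => //; exists t0.
  * by move=> m; rewrite eqxx.
  * by move=> m; rewrite addr0.
Qed.

Lemma indep c : W (lincomb c vs) -> forall i, c i = 0.
Proof.
move=> [s1 [s2 [[I1 [t T1]] I2 O2 E]]].
have Ht : forall q N, (wdeg cw N < q)%N -> (tdeg N + 2 < h)%N -> t N = 0.
  elim=> [|q IH] N //= lt hN.
  have le := le4_add M0 N.
  have := E (add4 N M0).
  rewrite T1 (psmul_single le); last first.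
    move=> m' le' ne.
    case: (eqVneq (F m') 0) => [->|nF]; first by rewrite mul0r.
    rewrite (IH (sub4 (add4 N M0) m')) ?mulr0 //.
      have := wdeg_sub cw le'; rewrite wdegD; have := Frho nF ne; lia.
    have := tdeg_sub le'; rewrite tdegD; have := Fdeg nF; lia.
  rewrite FM0 mul1r addK4 O2; last by rewrite tdegD; lia.
  rewrite lincomb_notin ?addr0 //.
  by rewrite mem_Sh /stdb le4_add !andbF.
move=> i.
have := mem_nth x0 (ltn_ord i); rewrite mem_Sh => /and3P [hM _ _].
have := E (nth x0 S i); rewrite lincomb_nth O2 // addr0 T1 => ->.
apply: psmul_zero => m' le.
case: (eqVneq (F m') 0) => [->|nF]; first by rewrite mul0r.
rewrite (Ht (wdeg cw (sub4 (nth x0 S i) m')).+1) ?mulr0 //.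
have := tdeg_sub le; have := Fdeg nF; move: hM; rewrite /S.
move: (tdeg (nth _ _ _)) (tdeg (sub4 _ _)) (tdeg m') => a b d; lia.
Qed.

Lemma colength_Sh : colength r w F h (size S).
Proof.
exists vs; split.
- exact: Inv_vsh.
- move=> v Iv; apply: (@span_ind (4 * h) v Iv) => M _ _ _; lia.
- exact: indep.
Qed.

Lemma colength_uniq n : colength r w F h n -> n = size S.
Proof.
move=> [us [Hu Hsp Hind]].
have WE : forall x y, W x -> (forall m, x m = y m) -> W y := @W_ext C r w F h.
have WA : forall x y, W x -> W y -> W (fun m => x m + y m) := @W_add C r w F h.
have WS : forall x a, W x -> W (fun m => a * x m) := @W_scale C r w F h.
have W0 : W (fun _ => 0) := @W_0 C r w F h.
have Hsp' : forall v, Inv r w v -> exists a, W (fun m => v m - lincomb a vs m).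
  move=> v Iv; apply: (@span_ind (4 * h) v Iv) => M _ _ _; lia.
apply/eqP; rewrite eqn_leq; apply/andP; split.
- exact: (codim_le WE WA WS W0 Hsp' Hu Hind).
- exact: (codim_le WE WA WS W0 Hsp (@Inv_vsh h) indep).
Qed.

End Fixh.
End Gen.

Section Counting.
Local Open Scope nat_scope.

Lemma A0 B L : \sum_(c < B) ((c < L) : nat) = minn B L.
Proof.
elim: B => [|B IH]; first by rewrite big_ord0 min0n.
rewrite big_ord_recr /= IH; case: (ltnP B L) => h; lia.
Qed.

Lemma A1 B L : 2 * \sum_(c < B) (L - c) = L * L.+1 - (L - B) * (L - B).+1.
Proof.
elim: B => [|B IH]; first by rewrite big_ord0 subn0; lia.
rewrite big_ord_recr /= mulnDr IH.
case: (leqP L B) => hLB.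
  have -> : L - B = 0 by lia.
  have -> : L - B.+1 = 0 by lia.
  lia.
have [t ->] : exists t, L = B + t.+1 by exists (L - B.+1); lia.
have -> : B + t.+1 - B = t.+1 by lia.
have -> : B + t.+1 - B.+1 = t by lia.
nia.
Qed.

Lemma A2 B H : 3 * \sum_(b < B) ((H - b) * (H - b).+1) =
  H * H.+1 * H.+2 - (H - B) * (H - B).+1 * (H - B).+2.
Proof.
elim: B => [|B IH]; first by rewrite big_ord0 subn0; lia.
rewrite big_ord_recr /= mulnDr IH.
case: (leqP H B) => hLB.
  have -> : H - B = 0 by lia.
  have -> : H - B.+1 = 0 by lia.
  lia.
have [t ->] : exists t, H = B + t.+1 by exists (H - B.+1); lia.
have -> : B + t.+1 - B = t.+1 by lia.
have -> : B + t.+1 - B.+1 = t by lia.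
nia.
Qed.


Variable r : nat.
Hypothesis r_gt0 : 0 < r.

Lemma D_formula f L : \sum_(k < L) (((f + k) %% r == 0) : nat) =
  (f + r.-1 + L) %/ r - (f + r.-1) %/ r.
Proof.
elim: L => [|L IH]; first by rewrite big_ord0 addn0 subnn.
rewrite big_ord_recr /= IH.
have -> : f + r.-1 + L.+1 = (f + r.-1 + L).+1 by lia.
rewrite divnS //.
have mono : (f + r.-1) %/ r <= (f + r.-1 + L) %/ r by apply: leq_div2r; lia.
have -> : (r %| (f + r.-1 + L).+1) = ((f + L) %% r == 0).
  have -> : (f + r.-1 + L).+1 = (f + L) + r by lia.
  by rewrite dvdn_addl // -dvdn_eq0 ?dvdn0 //; rewrite /dvdn.
lia.
Qed.

Lemma D_bounds f L :
  r * \sum_(k < L) (((f + k) %% r == 0) : nat) <= L + r * (0 < L) /\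
  L <= r * \sum_(k < L) (((f + k) %% r == 0) : nat) + r * (0 < L).
Proof.
case: L => [|L]; first by rewrite big_ord0.
rewrite D_formula; set X := f + r.-1; set L' := L.+1.
have h1 := leq_divM (X + L') r.
have h2 := ltn_ceil (X + L') r_gt0.
have h3 := leq_divM X r.
have h4 := ltn_ceil X r_gt0.
have mono : X %/ r <= (X + L') %/ r by apply: leq_div2r; lia.
move: h1 h2 h3 h4 mono; rewrite !mulSn.
move: ((X + L') %/ r) (X %/ r) => q1 q2; rewrite /=; nia.
Qed.


Lemma inner_eq h H b c (g : nat) : H <= h ->
  \sum_(d < h) (((b + c + d < H) && ((g + d) %% r == 0)) : nat) =
  \sum_(d < H - b - c) (((g + d) %% r == 0) : nat).
Proof.
move=> hH.
rewrite (big_ord_widen h (fun d => (((g + d) %% r == 0) : nat))); last by lia.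
rewrite [RHS]big_mkcond /=; apply: eq_bigr => d _.
have -> : (b + c + d < H) = (d < H - b - c) by rewrite -subnDA ltn_subRL.
by case: (d < H - b - c).
Qed.

Lemma T3 h H (psi : nat -> nat -> nat) : H <= h ->
  let T := \sum_(b < h) \sum_(c < h) \sum_(d < h)
             (((b + c + d < H) && ((psi b c + d) %% r == 0)) : nat) in
  6 * r * T <= H * H.+1 * H.+2 + 3 * r * (H * H.+1) /\
  H * H.+1 * H.+2 <= 6 * r * T + 3 * r * (H * H.+1).
Proof.
move=> hH /=.
under eq_bigr => b _ do under eq_bigr => c _ do rewrite (inner_eq _ _ _ hH).
set E := fun b c => \sum_(d < H - b - c) (((psi b c + d) %% r == 0) : nat).
rewrite -/(\sum_(b < h) \sum_(c < h) E b c).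
set S := \sum_(b < h) \sum_(c < h) (H - b - c).
set Z := \sum_(b < h) \sum_(c < h) ((0 < H - b - c) : nat).
have Sb : forall b, 2 * \sum_(c < h) (H - b - c) = (H - b) * (H - b).+1.
  move=> b; rewrite A1; have -> : H - b - h = 0 by lia.
  by rewrite mul0n subn0.
have S6 : 6 * S = H * H.+1 * H.+2.
  rewrite /S (_ : 6 = 3 * 2) // -mulnA big_distrr /=.
  under eq_bigr => b _ do rewrite Sb.
  rewrite A2; have -> : H - h = 0 by lia.
  by rewrite !mul0n subn0.
have Z2 : 2 * Z = H * H.+1.
  rewrite /Z.
  under eq_bigr => b _ do (under eq_bigr => c _ do rewrite subn_gt0; rewrite A0).
  have -> : \sum_(b < h) minn h (H - b) = \sum_(b < h) (H - b).
    by apply: eq_bigr => b _; apply/minn_idPr; lia.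
  rewrite A1; have -> : H - h = 0 by lia.
  by rewrite mul0n subn0.
have Up : r * \sum_(b < h) \sum_(c < h) E b c <= S + r * Z.
  rewrite /S /Z !big_distrr -big_split /=; apply: leq_sum => b _.
  rewrite !big_distrr -big_split /=; apply: leq_sum => c _.
  by case: (D_bounds (psi b c) (H - b - c)).
have Lo : S <= r * \sum_(b < h) \sum_(c < h) E b c + r * Z.
  rewrite /S /Z !big_distrr -big_split /=; apply: leq_sum => b _.
  rewrite !big_distrr -big_split /=; apply: leq_sum => c _.
  by case: (D_bounds (psi b c) (H - b - c)).
move: Up Lo S6 Z2; move: (\sum_(b < h) \sum_(c < h) E b c) S Z => T S Z.
split; nia.
Qed.

End Counting.

Section Count2.
Local Open Scope nat_scope.

Definition c4 h (P : mono -> bool) :=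
  \sum_(a < h) \sum_(b < h) \sum_(c < h) \sum_(d < h) (P (a : nat, b : nat, c : nat, d : nat) : nat).

Lemma sum_iota (F : nat -> nat) h : \sum_(a <- iota 0 h) F a = \sum_(a < h) F a.
Proof. by rewrite -(big_mkord xpredT) /index_iota subn0. Qed.

Lemma count_allmon h P : count P (allmon h) = c4 h P.
Proof.
rewrite -sum1_count big_mkcond /= /allmon !big_allpairs !sum_iota /c4.
apply: eq_bigr => a _; rewrite sum_iota; apply: eq_bigr => b _; rewrite sum_iota.
apply: eq_bigr => c _; rewrite sum_iota; apply: eq_bigr => d _; by case: P.
Qed.

Lemma mem_allmonE h a b c d :
  ((a, b, c, d) \in allmon h) = [&& a < h, b < h, c < h & d < h].
Proof.
apply/idP/idP.
- move/allpairsP => [[p d'] /= [Hp Hd [E1 E2]]]; subst.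
  move/allpairsP: Hp => [[q c'] /= [Hq Hc [E3 E4]]]; subst.
  move/allpairsP: Hq => [[a' b'] /= [Ha Hb [E5 E6]]]; subst.
  by move: Ha Hb Hc Hd; rewrite !mem_iota /= !add0n => -> -> -> ->.
- case/and4P => ha hb hc hd.
  apply: allpairs_f; last by rewrite mem_iota.
  apply: allpairs_f; last by rewrite mem_iota.
  by apply: allpairs_f; rewrite mem_iota.
Qed.

Lemma count_perm h P (s : mono -> mono) : involutive s ->
  (forall m, (s m \in allmon h) = (m \in allmon h)) ->
  count P (allmon h) = count (fun m => P (s m)) (allmon h).
Proof.
move=> inv Hs.
have -> : count (fun m => P (s m)) (allmon h) = count P (map s (allmon h)) by rewrite count_map.
apply/permP; apply: uniq_perm.
- exact: allmon_uniq.
- rewrite map_inj_uniq ?allmon_uniq //; exact: inv_inj.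
- move=> x; by rewrite -{2}(inv x) mem_map ?Hs //; exact: inv_inj.
Qed.

Lemma sum_le_sq h (f : 'I_h -> 'I_h -> bool) : \sum_(c < h) \sum_(d < h) (f c d : nat) <= h * h.
Proof.
apply: (@leq_trans (\sum_(c < h) \sum_(d < h) 1)).
  by apply: leq_sum => c _; apply: leq_sum => d _; case: (f c d).
by rewrite !big_const_ord !iter_addn_0 mul1n.
Qed.

End Count2.

Section Count3.
Local Open Scope nat_scope.

Lemma sum_lt2 h (G : nat -> nat) : 0 < h -> (h = 1 -> G 1 = 0) ->
  \sum_(a < h) (if a < 2 then G a else 0) = G 0 + G 1.
Proof.
case: h => [//|[|n]] _ H1.
  by rewrite big_ord1 /= H1 // addn0.
rewrite !big_ord_recl /= big1 ?addn0 // => i _.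
Qed.

Lemma sum_eq0 h (G : nat -> nat) : 0 < h ->
  \sum_(a < h) (if (a : nat) == 0 then G a else 0) = G 0.
Proof.
case: h => [//|n] _; rewrite big_ord_recl /= big1 ?addn0 // => i _.
Qed.

Lemma cntU h r w1 w2 w3 : 0 < h -> 0 < r ->
  let N := c4 h (fun m => [&& tdeg m < h, wdeg (w1, w2, w3, 1) m %% r == 0 & ~~ le4 (2, 0, 0, 0) m]) in
  6 * r * N <= 2 * (h * h * h) + 60 * r * (h * h) /\
  2 * (h * h * h) <= 6 * r * N + 60 * r * (h * h).
Proof.
move=> h0 r0 /=.
set G := fun a => \sum_(b < h) \sum_(c < h) \sum_(d < h)
   (((b + c + d < h - a) && ((w1 * a + w2 * b + w3 * c + d) %% r == 0)) : nat).
have -> : c4 h (fun m => [&& tdeg m < h, wdeg (w1, w2, w3, 1) m %% r == 0 & ~~ le4 (2, 0, 0, 0) m])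
   = \sum_(a < h) (if a < 2 then G a else 0).
  apply: eq_bigr => a _; case: ifP => ha.
    apply: eq_bigr => b _; apply: eq_bigr => c _; apply: eq_bigr => d _.
    rewrite /= mul1n ltn_subRL !addnA.
    have -> : (1 < a) = false by lia.
    by rewrite /= andbT.
  apply: big1 => b _; apply: big1 => c _; apply: big1 => d _.
  rewrite /=; have -> : (1 < a) = true by lia.
  by rewrite !andbF.
rewrite sum_lt2 //; last first.
  move=> e; rewrite /G e; apply: big1 => b _; apply: big1 => c _; apply: big1 => d _.
  by rewrite subnn ltn0.
have [U0 L0] := T3 r0 (h := h) (H := h - 0) (fun b c => w1 * 0 + w2 * b + w3 * c) (leq_subr _ _).
have [U1 L1] := T3 r0 (h := h) (H := h - 1) (fun b c => w1 * 1 + w2 * b + w3 * c) (leq_subr _ _).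
rewrite /= -/(G 0) -/(G 1) in U0 L0 U1 L1.
move: U0 L0 U1 L1; move: (G 0) (G 1) => g0 g1; clear G.
case: h h0 => [//|k] _; rewrite subn0 subSS subn0.
split; nia.
Qed.


Lemma cntXY h r w1 w2 w3 : 0 < h -> 0 < r ->
  let N := c4 h (fun m => [&& tdeg m < h, wdeg (w1, w2, w3, 1) m %% r == 0 & ~~ le4 (1, 1, 0, 0) m]) in
  6 * r * N <= 2 * (h * h * h) + 60 * r * (h * h) /\
  2 * (h * h * h) <= 6 * r * N + 60 * r * (h * h).
Proof.
move=> h0 r0 /=.
set P := (fun m => [&& tdeg m < h, wdeg (w1, w2, w3, 1) m %% r == 0 & ~~ le4 (1, 1, 0, 0) m]).
set Q := fun a b c d => (((a + b + c + d < h) && ((w1 * a + w2 * b + w3 * c + d) %% r == 0)) : nat).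
set X := \sum_(a < h) \sum_(b < h) \sum_(c < h) \sum_(d < h) (if (a : nat) == 0 then Q a b c d else 0).
set Y := \sum_(a < h) \sum_(b < h) \sum_(c < h) \sum_(d < h) (if (b : nat) == 0 then Q a b c d else 0).
set Z := \sum_(a < h) \sum_(b < h) \sum_(c < h) \sum_(d < h)
   (if (a : nat) == 0 then (if (b : nat) == 0 then Q a b c d else 0) else 0).
have pw : forall a b c d, (P (a, b, c, d) : nat) +
    (if a == 0 then (if b == 0 then Q a b c d else 0) else 0) =
    (if a == 0 then Q a b c d else 0) + (if b == 0 then Q a b c d else 0).
  move=> a b c d; rewrite /P /Q /= mul1n !leq0n !andbT.
  by case: a => [|a]; case: b => [|b]; rewrite /= ?andbT ?andbF ?addn0 ?add0n.
have Hsum : c4 h P + Z = X + Y.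
  rewrite /c4 /Z /X /Y -!big_split; apply: eq_bigr => a _.
  rewrite -!big_split; apply: eq_bigr => b _.
  rewrite -!big_split; apply: eq_bigr => c _.
  rewrite -!big_split; apply: eq_bigr => d _.
  exact: pw.
have HX : X = \sum_(b < h) \sum_(c < h) \sum_(d < h)
    (((b + c + d < h) && ((w1 * 0 + w2 * b + w3 * c + d) %% r == 0)) : nat).
  have -> : X = \sum_(a < h) (if (a : nat) == 0 then
      \sum_(b < h) \sum_(c < h) \sum_(d < h) Q a b c d else 0).
    apply: eq_bigr => a _; case: eqP => _ //.
    by apply: big1 => b _; apply: big1 => c _; apply: big1 => d _.
  rewrite (@sum_eq0 h (fun a => \sum_(b < h) \sum_(c < h) \sum_(d < h) Q a b c d)) //=.
have HY : Y = \sum_(a < h) \sum_(c < h) \sum_(d < h)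
    (((a + c + d < h) && ((w1 * a + w2 * 0 + w3 * c + d) %% r == 0)) : nat).
  apply: eq_bigr => a _.
  have -> : \sum_(b < h) \sum_(c < h) \sum_(d < h) (if (b : nat) == 0 then Q a b c d else 0)
     = \sum_(b < h) (if (b : nat) == 0 then \sum_(c < h) \sum_(d < h) Q a b c d else 0).
    apply: eq_bigr => b _; case: eqP => _ //.
    by apply: big1 => c _; apply: big1 => d _.
  rewrite (@sum_eq0 h (fun b => \sum_(c < h) \sum_(d < h) Q a b c d)) //=.
  by apply: eq_bigr => c _; apply: eq_bigr => d _; rewrite /Q addn0.
have HZ : Z <= h * h.
  have -> : Z = \sum_(c < h) \sum_(d < h) Q 0 0 c d.
    rewrite /Z.
    have -> : \sum_(a < h) \sum_(b < h) \sum_(c < h) \sum_(d < h)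
       (if (a : nat) == 0 then (if (b : nat) == 0 then Q a b c d else 0) else 0) =
       \sum_(a < h) (if (a : nat) == 0 then \sum_(b < h)
          (if (b : nat) == 0 then \sum_(c < h) \sum_(d < h) Q a b c d else 0) else 0).
      apply: eq_bigr => a _; case: eqP => _.
        apply: eq_bigr => b _; case: eqP => _ //.
        by apply: big1 => c _; apply: big1 => d _.
      by apply: big1 => b _; apply: big1 => c _; apply: big1 => d _.
    rewrite (@sum_eq0 h (fun a => \sum_(b < h)
          (if (b : nat) == 0 then \sum_(c < h) \sum_(d < h) Q a b c d else 0))) //.
    by rewrite (@sum_eq0 h (fun b => \sum_(c < h) \sum_(d < h) Q 0 b c d)).
  exact: (sum_le_sq (fun c d => (0 + 0 + c + d < h) && ((w1 * 0 + w2 * 0 + w3 * c + d) %% r == 0))).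
have [UX LX] := T3 r0 (h := h) (H := h) (fun b c => w1 * 0 + w2 * b + w3 * c) (leqnn _).
have [UY LY] := T3 r0 (h := h) (H := h) (fun a c => w1 * a + w2 * 0 + w3 * c) (leqnn _).
rewrite /= -HX in UX LX; rewrite /= -HY in UY LY.
move: Hsum HZ UX LX UY LY; clear HX HY; move: (c4 h P) X Y Z => N X1 Y1 Z1.
clear -h0 r0; split; nia.
Qed.

End Count3.

Lemma rat_bound (N h r : nat) : (0 < r)%N -> (0 < h)%N ->
  (6 * r * N <= 2 * (h * h * h) + 60 * r * (h * h))%N ->
  (2 * (h * h * h) <= 6 * r * N + 60 * r * (h * h))%N ->
  `| N%:R - 2%:R / r%:R * (h%:R ^+ 3) / (3`!)%:R | <= (10%:R : rat) * h%:R ^+ 3.-1.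
Proof.
move=> r0 h0 U L.
have f3 : (3`! = 6)%N by [].
rewrite f3 /=.
move: U L; rewrite -!(ler_nat rat) !natrD !natrM => U L.
have rp : (0 : rat) < r%:R by rewrite ltr0n.
have rn : (r%:R : rat) != 0 by rewrite gt_eqF.
rewrite (_ : N%:R - 2%:R / r%:R * h%:R ^+ 3 / 6%:R =
   (6%:R * r%:R * N%:R - 2%:R * h%:R ^+ 3) / (6%:R * r%:R)); last by field; rewrite rn.
have pos : (0 : rat) < 6%:R * r%:R by rewrite mulr_gt0 ?ltr0n.
rewrite normrM normfV (gtr0_norm pos) ler_pdivrMr //.
rewrite ler_norml; move: U L; rewrite !expr2 !exprS expr0 !mulr1.
clear rn pos; move: (r%:R : rat) (h%:R : rat) (N%:R : rat) rp => R H M Rp U L.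
apply/andP; split; nra.
Qed.

Lemma wmult_gen (C : numClosedFieldType) r w cw (F : ps C) M0 :
  (0 < r)%N -> F M0 = 1 -> (forall m, F m != 0 -> wdeg w m = wdeg w M0 %[mod r]) ->
  (forall m, F m != 0 -> (2 <= tdeg m)%N) -> tdeg M0 = 2%N ->
  (forall m, F m != 0 -> m != M0 -> (wdeg cw M0 < wdeg cw m)%N) ->
  (forall m, (wdeg cw m <= 4 * tdeg m)%N) ->
  (forall h, (0 < h)%N ->
     (6 * r * size (Sh r w M0 h) <= 2 * (h * h * h) + 60 * r * (h * h))%N /\
     (2 * (h * h * h) <= 6 * r * size (Sh r w M0 h) + 60 * r * (h * h))%N) ->
  wmult_is r w F 3 (2%:R / r%:R).
Proof.
move=> r0 FM0 Fs Fd M0d Fr cwl Hc; split.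
  move=> h; exists (size (Sh r w M0 h)); exact: (colength_Sh r0 FM0 Fs Fd M0d Fr cwl).
exists 10%:R => h n h0 Hn.
rewrite (colength_uniq r0 FM0 Fs Fd M0d Fr cwl Hn).
have [U L] := Hc h h0; exact: rat_bound.
Qed.

Lemma size_Sh r w M0 h :
  size (Sh r w M0 h) = count (fun m => [&& (tdeg m < h)%N, invb r w m & stdb M0 m]) (allmon h).
Proof. by rewrite size_filter. Qed.

Definition swap14 (m : mono) : mono := let: (a, b, c, d) := m in (d, b, c, a).
Definition swap24 (m : mono) : mono := let: (a, b, c, d) := m in (a, d, c, b).
Lemma swap14_inv : involutive swap14. Proof. by move=> [[[a b] c] d]. Qed.
Lemma swap24_inv : involutive swap24. Proof. by move=> [[[a b] c] d]. Qed.
Lemma swap14_mem h m : (swap14 m \in allmon h) = (m \in allmon h).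
Proof.
case: m => [[[a b] c] d]; rewrite /= !mem_allmonE.
by case: (a < h)%N; case: (d < h)%N; rewrite /= ?andbF.
Qed.
Lemma swap24_mem h m : (swap24 m \in allmon h) = (m \in allmon h).
Proof.
case: m => [[[a b] c] d]; rewrite /= !mem_allmonE.
by case: (b < h)%N; case: (d < h)%N; rewrite /= ?andbF.
Qed.

Lemma Fdeg_of (C : numClosedFieldType) (F : ps C) : ~ nf_quotient_sing F ->
  forall m, F m != 0 -> (2 <= tdeg m)%N.
Proof.
move=> H m nz; have O : ord_ge F 2 := NNPP _ H.
rewrite leqNgt; apply/negP => lt; by rewrite (O m lt) eqxx in nz.
Qed.

Lemma rhoU m : (2 <= tdeg m)%N -> m != (2, 0, 0, 0)%N ->
  (wdeg (3, 4, 4, 4)%N (2, 0, 0, 0)%N < wdeg (3, 4, 4, 4)%N m)%N.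
Proof.
case: m => [[[a b] c] d] /= hd ne.
rewrite ltnNge; apply/negP => hle; move/eqP: ne; apply.
have -> : a = 2%N by lia. have -> : b = 0%N by lia. have -> : c = 0%N by lia. have -> : d = 0%N by lia. done.
Qed.

Lemma rhoV m : (2 <= tdeg m)%N -> m != (0, 0, 0, 2)%N ->
  (wdeg (4, 4, 4, 3)%N (0, 0, 0, 2)%N < wdeg (4, 4, 4, 3)%N m)%N.
Proof.
case: m => [[[a b] c] d] /= hd ne.
rewrite ltnNge; apply/negP => hle; move/eqP: ne; apply.
have -> : a = 0%N by lia. have -> : b = 0%N by lia. have -> : c = 0%N by lia. have -> : d = 2%N by lia. done.
Qed.

Lemma cwU m : (wdeg (3, 4, 4, 4)%N m <= 4 * tdeg m)%N.
Proof. case: m => [[[a b] c] d] /=; lia. Qed.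
Lemma cwV m : (wdeg (4, 4, 4, 3)%N m <= 4 * tdeg m)%N.
Proof. case: m => [[[a b] c] d] /=; lia. Qed.
Lemma cwXY m : (wdeg (3, 3, 4, 4)%N m <= 4 * tdeg m)%N.
Proof. case: m => [[[a b] c] d] /=; lia. Qed.

Unset Implicit Arguments.

Theorem theorem2p7 (C : numClosedFieldType) (r : nat) (w : wts) (F : ps C) :
  mori_normal_form r w F ->
  semi_invariant r w F ->
  through_origin F ->
  ~ nf_quotient_sing F ->
  (1 < r)%N ->
  wmult_is r w F 3 (2%:R / r%:R).
Proof.
move=> Hmori [e He] _ Hnq r1.
have r0 : (0 < r)%N by lia.
have Fd := Fdeg_of Hnq.
have Fs : forall M0, F M0 = 1 -> forall m, F m != 0 -> wdeg w m = wdeg w M0 %[mod r].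
  by move=> M0 HM0 m nz; rewrite (He m nz) (He M0) // HM0 oner_neq0.
case: Hmori => [[a0 [f [ha hc Ew HF]]]|[[f [Er Ew HF]]|[[f [Er Ew _ HF]]|[[f [g [Er Ew _ Hg HF]]]|[[f [g [Er Ew _ Hg HF]]]|[g [h [Er Ew _ _ HF]]]]]]]]; subst.
-
  have HM0 : F (1, 1, 0, 0)%N = 1 by rewrite HF /mon /= addr0.
  apply: (wmult_gen (cw := (3, 3, 4, 4)%N) r0 HM0 (Fs _ HM0) Fd erefl _ cwXY).
    move=> [[[p q] s] t] nz ne; have d2 := Fd _ nz; move: nz.
    rewrite HF /mon (negbTE ne) add0r.
    case: ifP => [/and3P [/eqP E1 /eqP E2 _] _ | _]; last by rewrite eqxx.
    move: d2; rewrite /= E1 E2; lia.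
  move=> h h0; rewrite size_Sh count_allmon.
  exact: (cntXY a0 (r - a0) r h0 r0).
-
  have HM0 : F (2, 0, 0, 0)%N = 1 by rewrite HF /mon /= !addr0.
  apply: (wmult_gen (cw := (3, 4, 4, 4)%N) r0 HM0 (Fs _ HM0) Fd erefl _ cwU).
    by move=> m nz ne; apply: rhoU => //; apply: Fd.
  move=> h h0; rewrite size_Sh count_allmon.
  exact: (cntU 1 3 2 h0 r0).
-
  have HM0 : F (2, 0, 0, 0)%N = 1 by rewrite HF /mon /= !addr0.
  apply: (wmult_gen (cw := (3, 4, 4, 4)%N) r0 HM0 (Fs _ HM0) Fd erefl _ cwU).
    by move=> m nz ne; apply: rhoU => //; apply: Fd.
  move=> h h0; rewrite size_Sh count_allmon.
  exact: (cntU 1 2 1 h0 r0).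
-
  have HM0 : F (0, 0, 0, 2)%N = 1.
    rewrite HF /mon /=.
    by case: Hg => [Hg|[[n [_ Hg]]|[n [_ Hg]]]]; rewrite Hg /mon ?xpair_eqE /= ?andbF ?addr0.
  apply: (wmult_gen (cw := (4, 4, 4, 3)%N) r0 HM0 (Fs _ HM0) Fd erefl _ cwV).
    by move=> m nz ne; apply: rhoV => //; apply: Fd.
  move=> h h0; rewrite size_Sh (count_perm _ swap14_inv (swap14_mem h)).
  rewrite (@eq_count _ _ (fun m => [&& (tdeg m < h)%N, (wdeg (1, 1, 2, 1) m %% 2)%N == 0%N
       & ~~ le4 (2%N, 0%N, 0%N, 0%N) m])); last first.
    move=> [[[a b] c] d]; rewrite /invb /stdb /=; apply/idP/idP => /and3P [X Y Z]; apply/and3P; split; lia.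
  rewrite count_allmon; exact: (cntU 1 1 2 h0 r0).
-
  have HM0 : F (0, 0, 0, 2)%N = 1.
    rewrite HF /mon /=.
    by case: Hg => [[Hg _]|[Hg|Hg]]; rewrite Hg /mon ?xpair_eqE /= ?andbF ?addr0.
  apply: (wmult_gen (cw := (4, 4, 4, 3)%N) r0 HM0 (Fs _ HM0) Fd erefl _ cwV).
    by move=> m nz ne; apply: rhoV => //; apply: Fd.
  move=> h h0; rewrite size_Sh (count_perm _ swap14_inv (swap14_mem h)).
  rewrite (@eq_count _ _ (fun m => [&& (tdeg m < h)%N, (wdeg (3, 2, 2, 1) m %% 3)%N == 0%N
       & ~~ le4 (2%N, 0%N, 0%N, 0%N) m])); last first.
    move=> [[[a b] c] d]; rewrite /invb /stdb /=; apply/idP/idP => /and3P [X Y Z]; apply/and3P; split; lia.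
  rewrite count_allmon; exact: (cntU 3 2 2 h0 r0).
-
  have HM0 : F (0, 0, 0, 2)%N = 1 by rewrite HF /mon /= !addr0.
  apply: (wmult_gen (cw := (4, 4, 4, 3)%N) r0 HM0 (Fs _ HM0) Fd erefl _ cwV).
    by move=> m nz ne; apply: rhoV => //; apply: Fd.
  move=> h0' h0; rewrite size_Sh (count_perm _ swap14_inv (swap14_mem h0')).
  rewrite (count_perm _ swap24_inv (swap24_mem h0')).
  rewrite (@eq_count _ _ (fun m => [&& (tdeg m < h0')%N, (wdeg (1, 2, 1, 1) m %% 2)%N == 0%N
       & ~~ le4 (2%N, 0%N, 0%N, 0%N) m])); last first.
    move=> [[[a b] c] d]; rewrite /invb /stdb /=; apply/idP/idP => /and3P [X Y Z]; apply/and3P; split; lia.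
  rewrite count_allmon; exact: (cntU 1 2 1 h0 r0).
Qed.
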